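(* Let $r,s\ge0$, let $\Delta=(v_1,\dots,v_n)$ be a collection of vectors in $\mathbb{Z}^2\setminus\{0\}$, let $F\subset\{1,\dots,n\}$ with $r+2s+|F|=|\Delta|-1$, and let $\mathcal{P}$ be a collection of conditions in general position for $\mathrm{ev}_F$. Then a curve $C\in\mathcal{M}_{(r,s)}(\Delta)$ with $\mathrm{ev}_F(C)=\mathcal{P}$ is a refined descendant curve if and only if it is an unoriented refined broccoli curve; in particular the two sets of such curves through $\mathcal{P}$ are in bijection.
   Context: Curves. An $(r,s)$-marked curve of degree $\Delta$ is $C=(\Gamma,h,x_1,\dots,x_{r+s})$ with $\Gamma$ a metric graph whose components are trees, $h:\Gamma\to\mathbb{R}^2$ continuous, affine with integral direction vectors on edges, balanced at vertices; $x_1,\dots,x_r$ (real) and $x_{r+1},\dots,x_{r+s}$ (complex) are contracted unbounded edges (markings), the other unbounded edges $y_1,\dots,y_n$ (labeled ends) have outward direction vectors $\Delta=(v(y_1),\dots,v(y_n))$. $\mathcal{M}_{(r,s)}(\Delta)$ is the polyhedral complex of isomorphism classes of connected such curves (cells = combinatorial types). $\mathrm{ev}_F(C)=(h(x_1),\dots,h(x_{r+s}),(h(y_i))_{i\in F})\in(\mathbb{R}^2)^{r+s}\times\prod_{i\in F}\mathbb{R}^2/\langle v(y_i)\rangle$; $\mathcal P$ is in general position for $\mathrm{ev}_F$ if it avoids the images of all cells whose image has dimension $<2(r+s)+|F|$. Unoriented refined broccoli curve: a curve in $\mathcal{M}_{(r,s)}(\Delta)$ each of whose vertices is (I') 3-valent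 in $\Gamma$ and adjacent to a real marking, (II') 3-valent without marking, or (III') 4-valent in $\Gamma$ and adjacent to a complex marking. Refined descendant curve: a curve in $\mathcal{M}_{(r,s)}(\Delta)$ such that each real marking is adjacent to a 3-valent vertex of $\Gamma$ and each complex marking is adjacent to a 4-valent vertex of $\Gamma$ (unmarked vertices of any valence are allowed). *)

(* Defs.v *)
From Stdlib Require Import Reals ZArith List Arith.
Import ListNotations.
Open Scope R_scope.

Fixpoint sumR (k : nat) (f : nat -> R) : R :=
  match k with O => 0 | S k' => sumR k' f + f k' end.

Fixpoint sumZ2 (k : nat) (f : nat -> Z * Z) : Z * Z :=
  match k with
  | O => (0%Z, 0%Z)
  | S k' => let '(a, b) := sumZ2 k' f in let '(c, d) := f k' in (a + c, b + d)%Z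
  end.

Fixpoint countn (k : nat) (p : nat -> bool) : nat :=
  match k with O => O | S k' => (countn k' p + (if p k' then 1 else 0))%nat end.

Definition negZ2 (v : Z * Z) : Z * Z := ((- fst v)%Z, (- snd v)%Z).
Definition addZ2 (v w : Z * Z) : Z * Z := ((fst v + fst w)%Z, (snd v + snd w)%Z).

(* Vertices are 0..nv-1, bounded edges 0..ne-1 (edge e goes from vertex
   esrc e to vertex etgt e, has length elen e and integral direction vector
   edir e, i.e. h(etgt e) - h(esrc e) = elen e * edir e).  pos v = h(v).
   The marking x_{i+1} (i < r+s) is a contracted end at vertex mvert i
   (x_1..x_r real, x_{r+1}..x_{r+s} complex); the labeled end y_{j+1}
   (j < n = |Delta|) is an end at vertex yvert j with outward direction
   the j-th entry of Delta. *)
Record curve := mkCurve {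
  nv : nat;
  ne : nat;
  esrc : nat -> nat;
  etgt : nat -> nat;
  edir : nat -> Z * Z;
  elen : nat -> R;
  pos : nat -> R * R;
  mvert : nat -> nat;
  yvert : nat -> nat
}.

Definition dirD (D : list (Z * Z)) (j : nat) : Z * Z := nth j D (0%Z, 0%Z).

Definition valence (r s n : nat) (C : curve) (v : nat) : nat :=
  (countn (ne C) (fun e => Nat.eqb (esrc C e) v)
   + countn (ne C) (fun e => Nat.eqb (etgt C e) v)
   + countn (r + s) (fun i => Nat.eqb (mvert C i) v)
   + countn n (fun j => Nat.eqb (yvert C j) v))%nat.

Inductive reach (C : curve) : nat -> nat -> Prop :=
  | reach_refl v : reach C v v
  | reach_fwd u e : (e < ne C)%nat -> reach C u (esrc C e) -> reach C u (etgt C e)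
  | reach_bwd u e : (e < ne C)%nat -> reach C u (etgt C e) -> reach C u (esrc C e).

Definition is_tree (C : curve) : Prop :=
  nv C = S (ne C) /\ forall v, (v < nv C)%nat -> reach C 0 v.

(* outward sum of direction vectors at v (markings are contracted: weight 0) *)
Definition balance_sum (D : list (Z * Z)) (C : curve) (v : nat) : Z * Z :=
  addZ2 (sumZ2 (ne C) (fun e => if Nat.eqb (esrc C e) v then edir C e else (0%Z, 0%Z)))
  (addZ2 (negZ2 (sumZ2 (ne C) (fun e => if Nat.eqb (etgt C e) v then edir C e else (0%Z, 0%Z))))
         (sumZ2 (length D) (fun j => if Nat.eqb (yvert C j) v then dirD D j else (0%Z, 0%Z)))).

Definition is_curve (r s : nat) (D : list (Z * Z)) (C : curve) : Prop :=
  (forall e, (e < ne C)%nat -> (esrc C e < nv C)%nat /\ (etgt C e < nv C)%nat) /\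
  (forall i, (i < r + s)%nat -> (mvert C i < nv C)%nat) /\
  (forall j, (j < length D)%nat -> (yvert C j < nv C)%nat) /\
  is_tree C /\
  (forall v, (v < nv C)%nat -> (3 <= valence r s (length D) C v)%nat) /\
  (forall e, (e < ne C)%nat -> 0 < elen C e) /\
  (forall e, (e < ne C)%nat ->
     fst (pos C (etgt C e)) = fst (pos C (esrc C e)) + elen C e * IZR (fst (edir C e)) /\
     snd (pos C (etgt C e)) = snd (pos C (esrc C e)) + elen C e * IZR (snd (edir C e))) /\
  (forall v, (v < nv C)%nat -> balance_sum D C v = (0%Z, 0%Z)).

Definition same_type (r s n : nat) (C C' : curve) : Prop :=
  nv C = nv C' /\ ne C = ne C' /\
  (forall e, (e < ne C)%nat ->
     esrc C e = esrc C' e /\ etgt C e = etgt C' e /\ edir C e = edir C' e) /\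
  (forall i, (i < r + s)%nat -> mvert C i = mvert C' i) /\
  (forall j, (j < n)%nat -> yvert C j = yvert C' j).

(* R^2/<v> is identified with R via the isomorphism [p] |-> det(v,p). *)
Definition quot_coord (v : Z * Z) (p : R * R) : R :=
  IZR (fst v) * snd p - IZR (snd v) * fst p.

Definition cardF (n : nat) (F : nat -> bool) : nat := countn n F.

(* ev_F(C) in (R^2)^(r+s) x prod_{j in F} R^2/<v_j>, as a list of reals *)
Definition ev_F (r s : nat) (D : list (Z * Z)) (F : nat -> bool) (C : curve) : list R :=
  flat_map (fun i => [fst (pos C (mvert C i)); snd (pos C (mvert C i))]) (seq 0 (r + s))
  ++ map (fun j => quot_coord (dirD D j) (pos C (yvert C j))) (filter F (seq 0 (length D))).

Definition aff_indep (pts : nat -> list R) (k : nat) : Prop :=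
  forall c : nat -> R,
    (forall t, sumR k (fun i => c (S i) * (nth t (pts (S i)) 0 - nth t (pts 0%nat) 0)) = 0) ->
    forall i, (1 <= i <= k)%nat -> c i = 0.

Definition affdim_ge (S : list R -> Prop) (k : nat) : Prop :=
  exists pts : nat -> list R, (forall i, (i <= k)%nat -> S (pts i)) /\ aff_indep pts k.

Definition cell_image (r s : nat) (D : list (Z * Z)) (F : nat -> bool) (C : curve)
  : list R -> Prop :=
  fun p => exists C', is_curve r s D C' /\ same_type r s (length D) C C' /\ ev_F r s D F C' = p.

(* P avoids the images of all cells whose image has dimension < 2(r+s)+|F| *)
Definition general_position (r s : nat) (D : list (Z * Z)) (F : nat -> bool) (P : list R)
  : Prop :=
  forall C, is_curve r s D C -> ev_F r s D F C = P ->
    affdim_ge (cell_image r s D F C) (2 * (r + s) + cardF (length D) F).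

Definition refined_descendant (r s : nat) (D : list (Z * Z)) (C : curve) : Prop :=
  (forall i, (i < r)%nat -> valence r s (length D) C (mvert C i) = 3%nat) /\
  (forall i, (r <= i < r + s)%nat -> valence r s (length D) C (mvert C i) = 4%nat).

Definition unoriented_refined_broccoli (r s : nat) (D : list (Z * Z)) (C : curve) : Prop :=
  forall v, (v < nv C)%nat ->
    (valence r s (length D) C v = 3%nat /\ exists i, (i < r)%nat /\ mvert C i = v) \/
    (valence r s (length D) C v = 3%nat /\ forall i, (i < r + s)%nat -> mvert C i <> v) \/
    (valence r s (length D) C v = 4%nat /\ exists i, (r <= i < r + s)%nat /\ mvert C i = v).

(* Main.v *)
Require Import Defs.
From Stdlib Require Import Reals ZArith List Arith Lia Lra Classical IndefiniteDescription Bool.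
Import ListNotations.
Import Defs.
Open Scope R_scope.

Lemma sumR_ext k f g : (forall i, (i < k)%nat -> f i = g i) -> sumR k f = sumR k g.
Proof. induction k; simpl; intros H; auto. rewrite IHk by (intros; apply H; lia). rewrite H by lia. auto. Qed.

Lemma sumR_zero k f : (forall i, (i < k)%nat -> f i = 0) -> sumR k f = 0.
Proof. intros H. rewrite (sumR_ext k f (fun _ => 0)) by auto. induction k; simpl; auto. rewrite IHk; [lra|]. intros; apply H; lia. Qed.

Lemma sumR_plus k f g : sumR k (fun i => f i + g i) = sumR k f + sumR k g.
Proof. induction k; simpl; [lra|]. rewrite IHk; lra. Qed.

Lemma sumR_minus k f g : sumR k (fun i => f i - g i) = sumR k f - sumR k g.
Proof. induction k; simpl; [lra|]. rewrite IHk; lra. Qed.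

Lemma sumR_scal k a f : sumR k (fun i => a * f i) = a * sumR k f.
Proof. induction k; simpl; [lra|]. rewrite IHk; lra. Qed.

Lemma sumR_scalr k a f : sumR k (fun i => f i * a) = sumR k f * a.
Proof. induction k; simpl; [lra|]. rewrite IHk; lra. Qed.

Lemma sumR_ind k i0 g : (i0 < k)%nat -> sumR k (fun i => (if Nat.eqb i i0 then 1 else 0) * g i) = g i0.
Proof. induction k; simpl; intros H; [lia|].
  destruct (Nat.eqb k i0) eqn:E.
  - apply Nat.eqb_eq in E; subst. rewrite sumR_zero; [lra|].
    intros i Hi. destruct (Nat.eqb i i0) eqn:E2; [apply Nat.eqb_eq in E2; lia| lra].
  - apply Nat.eqb_neq in E. rewrite IHk by lia. lra. Qed.

Lemma sumR_swap k m f : sumR k (fun i => sumR m (fun l => f i l)) = sumR m (fun l => sumR k (fun i => f i l)).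
Proof. induction k; simpl.
  - rewrite sumR_zero; auto.
  - rewrite IHk. rewrite <- sumR_plus. auto. Qed.

Lemma countn_ext k p q : (forall i, (i < k)%nat -> p i = q i) -> countn k p = countn k q.
Proof. induction k; simpl; intros H; auto. rewrite IHk by (intros; apply H; lia). rewrite H by lia. auto. Qed.

Lemma countn_pos k p : (0 < countn k p)%nat -> exists i, (i < k)%nat /\ p i = true.
Proof. induction k; simpl; intros H; [lia|]. destruct (p k) eqn:E.
  - exists k; split; auto.
  - destruct IHk as [i [Hi Hp]]; [lia|]. exists i; split; auto. Qed.

Lemma countn_rem k p i0 : (i0 < k)%nat -> p i0 = true ->
  (countn k (fun j => p j && negb (Nat.eqb j i0)) + 1 = countn k p)%nat.
Proof. induction k; simpl; intros H Hp; [lia|].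
  destruct (Nat.eqb k i0) eqn:E.
  - apply Nat.eqb_eq in E; subst. rewrite Hp. simpl.
    rewrite (countn_ext _ _ p). lia. intros i Hi. destruct (Nat.eqb i i0) eqn:E2; [apply Nat.eqb_eq in E2; lia|].
    rewrite andb_true_r; auto.
  - simpl. rewrite andb_true_r. rewrite <- IHk by (auto; apply Nat.eqb_neq in E; lia). lia. Qed.

Lemma dep (m : nat) : forall k (p : nat -> bool) (w : nat -> nat -> R),
  (m < countn k p)%nat ->
  exists c : nat -> R, (forall i, p i = false -> c i = 0) /\ (exists i, (i < k)%nat /\ c i <> 0) /\
    forall l, (l < m)%nat -> sumR k (fun i => c i * w i l) = 0.
Proof.
  induction m; intros k p w Hm.
  - destruct (countn_pos k p) as [i [Hi Hp]]; [lia|].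
    exists (fun j => if Nat.eqb j i then 1 else 0). split; [|split].
    + intros j Hj. destruct (Nat.eqb j i) eqn:E; auto. apply Nat.eqb_eq in E; subst; congruence.
    + exists i; split; auto. rewrite Nat.eqb_refl. lra.
    + intros; lia.
  - destruct (classic (exists i0, (i0 < k)%nat /\ p i0 = true /\ w i0 m <> 0)) as [[i0 [Hi0 [Hp0 Hw0]]]|Hno].
    + pose proof (countn_rem k p i0 Hi0 Hp0) as Hc.
      set (w2 := fun i l => w i l - w i m / w i0 m * w i0 l).
      destruct (IHm k (fun j => p j && negb (Nat.eqb j i0)) w2) as [c [Hs [[i1 [Hi1 Hc1]] Hz]]]; [lia|].
      set (K := sumR k (fun i => c i * w i m) / w i0 m).
      exists (fun i => c i - (if Nat.eqb i i0 then 1 else 0) * K). split; [|split].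
      * intros i Hpi. rewrite Hs by (rewrite Hpi; auto).
        destruct (Nat.eqb i i0) eqn:E; [apply Nat.eqb_eq in E; subst; congruence| lra].
      * exists i1; split; auto.
        assert (Hne : Nat.eqb i1 i0 = false).
        { destruct (Nat.eqb i1 i0) eqn:E; auto. exfalso. apply Hc1, Hs. rewrite E. apply andb_false_r. }
        rewrite Hne. lra.
      * intros l Hl.
        assert (E1 : sumR k (fun i => (c i - (if Nat.eqb i i0 then 1 else 0) * K) * w i l)
                 = sumR k (fun i => c i * w i l) - K * w i0 l).
        { rewrite <- (sumR_ind k i0 (fun i => K * w i l)) by auto.
          rewrite <- sumR_minus. apply sumR_ext; intros; lra. }
        rewrite E1. destruct (Nat.eq_dec l m) as [->|Hlm].
        -- unfold K. field. auto.
        -- pose proof (Hz l ltac:(lia)) as Hz'. unfold w2 in Hz'.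
           assert (E2 : sumR k (fun i => c i * (w i l - w i m / w i0 m * w i0 l))
                   = sumR k (fun i => c i * w i l) - K * w i0 l).
           { unfold K. rewrite (sumR_ext k _ (fun i => c i * w i l - c i * w i m * (w i0 l / w i0 m))).
             - rewrite sumR_minus, sumR_scalr. field; auto.
             - intros; field; auto. }
           lra.
    + destruct (IHm k p w) as [c [Hs [Hnz Hz]]]; [lia|].
      exists c; split; [|split]; auto.
      intros l Hl. destruct (Nat.eq_dec l m) as [->|Hlm]; [|apply Hz; lia].
      apply sumR_zero. intros i Hi. destruct (p i) eqn:Ep.
      * assert (w i m = 0) as ->; [|lra]. apply NNPP; intro Hw. apply Hno; eauto.
      * rewrite Hs; auto; lra.
Qed.

Lemma countn_true k : countn k (fun _ => true) = k.
Proof. induction k; simpl; lia. Qed.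

Lemma no_affdim {X : Type} (Sset : list R -> Prop) (Q : X -> Prop) (E : X -> list R)
  (th : X -> nat -> R) (m k : nat) (x0 : X) :
  (forall p, Sset p -> exists x, Q x /\ E x = p) ->
  (forall t, exists M : nat -> R, forall x, Q x -> nth t (E x) 0 = sumR m (fun l => th x l * M l)) ->
  (m < k)%nat -> ~ affdim_ge Sset k.
Proof.
  intros HS HM Hmk [pts [Hin Hind]].
  assert (Hex : forall i, exists x, (i <= k)%nat -> Q x /\ E x = pts i).
  { intros i. destruct (le_lt_dec i k) as [Hi|Hi].
    - destruct (HS _ (Hin i Hi)) as [x Hx]. exists x; auto.
    - exists x0; intros; lia. }
  set (xs := fun i => proj1_sig (constructive_indefinite_description _ (Hex i))).
  assert (Hxs : forall i, (i <= k)%nat -> Q (xs i) /\ E (xs i) = pts i).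
  { intros i Hi. unfold xs. destruct (constructive_indefinite_description _ (Hex i)); simpl; auto. }
  set (w := fun i l => th (xs (S i)) l - th (xs 0%nat) l).
  destruct (dep m k (fun _ => true) w) as [c [_ [[i1 [Hi1 Hc1]] Hz]]]; [rewrite countn_true; auto|].
  apply Hc1.
  refine (Hind (fun i => match i with O => 0 | S j => c j end) _ (S i1) _); [|lia].
  intros t. destruct (HM t) as [M HMt]. simpl.
  rewrite (sumR_ext k _ (fun i => c i * sumR m (fun l => w i l * M l))).
  - rewrite (sumR_ext k _ (fun i => sumR m (fun l => c i * w i l * M l))).
    + rewrite sumR_swap. apply sumR_zero. intros l Hl.
      rewrite sumR_scalr. rewrite Hz by auto. lra.
    + intros i Hi. rewrite <- sumR_scal. apply sumR_ext; intros; lra.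
  - intros i Hi. destruct (Hxs (S i) ltac:(lia)) as [HQ HE]. destruct (Hxs 0%nat ltac:(lia)) as [HQ0 HE0].
    rewrite <- HE, <- HE0, !HMt by auto. unfold w. f_equal.
    rewrite <- sumR_minus. apply sumR_ext; intros; lra.
Qed.

Lemma sumR_pick m g l0 : sumR m (fun l => g l * (if Nat.eqb l l0 then 1 else 0)) = if Nat.ltb l0 m then g l0 else 0.
Proof.
  destruct (Nat.ltb l0 m) eqn:E.
  - apply Nat.ltb_lt in E. rewrite <- (sumR_ind m l0 g) by auto. apply sumR_ext; intros; lra.
  - apply Nat.ltb_ge in E. apply sumR_zero. intros i Hi.
    destruct (Nat.eqb i l0) eqn:E2; [apply Nat.eqb_eq in E2; lia| lra].
Qed.

Lemma dup_coord (Sset : list R -> Prop) L a b : (a < b)%nat -> (b < L)%nat ->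
  (forall p, Sset p -> length p = L /\ nth a p 0 = nth b p 0) -> ~ affdim_ge Sset L.
Proof.
  intros Hab HbL HS.
  set (idx := fun l => if Nat.ltb l b then l else S l).
  apply (no_affdim Sset (fun p => Sset p) (fun p => p) (fun p l => nth (idx l) p 0) (L - 1) L nil).
  - intros p Hp; exists p; auto.
  - intros t. set (l0 := if Nat.ltb t b then t else if Nat.eqb t b then a else (t - 1)%nat).
    exists (fun l => if Nat.eqb l l0 then 1 else 0). intros p Hp.
    destruct (HS p Hp) as [Hlen Hnab].
    rewrite sumR_pick. unfold l0, idx.
    destruct (Nat.ltb t b) eqn:E1.
    + apply Nat.ltb_lt in E1. replace (Nat.ltb t (L-1)) with true by (symmetry; apply Nat.ltb_lt; lia).
      rewrite (proj2 (Nat.ltb_lt t b) E1). auto.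
    + apply Nat.ltb_ge in E1. destruct (Nat.eqb t b) eqn:E2.
      * apply Nat.eqb_eq in E2; subst t.
        replace (Nat.ltb a (L-1)) with true by (symmetry; apply Nat.ltb_lt; lia).
        rewrite (proj2 (Nat.ltb_lt a b) Hab). auto.
      * apply Nat.eqb_neq in E2. destruct (Nat.ltb (t-1) (L-1)) eqn:E3.
        -- apply Nat.ltb_lt in E3. replace (Nat.ltb (t-1) b) with false by (symmetry; apply Nat.ltb_ge; lia).
           f_equal. lia.
        -- apply Nat.ltb_ge in E3. apply nth_overflow. lia.
  - lia.
Qed.

Definition thC (C : curve) (l : nat) : R :=
  match l with O => fst (pos C 0) | S O => snd (pos C 0) | S (S e) => elen C e end.

Definition linf (Q : curve -> Prop) (m : nat) (g : curve -> R) : Prop :=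
  exists M : nat -> R, forall x, Q x -> g x = sumR m (fun l => thC x l * M l).

Lemma linf_add Q m g h : linf Q m g -> linf Q m h -> linf Q m (fun x => g x + h x).
Proof. intros [M1 H1] [M2 H2]. exists (fun l => M1 l + M2 l). intros x Hx.
  rewrite H1, H2 by auto. rewrite <- sumR_plus. apply sumR_ext; intros; lra. Qed.

Lemma linf_scal Q m a g : linf Q m g -> linf Q m (fun x => a * g x).
Proof. intros [M1 H1]. exists (fun l => a * M1 l). intros x Hx.
  rewrite H1 by auto. rewrite <- sumR_scal. apply sumR_ext; intros; lra. Qed.

Lemma linf_zero Q m : linf Q m (fun _ => 0).
Proof. exists (fun _ => 0). intros. rewrite sumR_zero; auto. intros; lra. Qed.

Lemma linf_var Q m l0 : (l0 < m)%nat -> linf Q m (fun x => thC x l0).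
Proof. intros H. exists (fun l => if Nat.eqb l l0 then 1 else 0). intros x _.
  rewrite sumR_pick. rewrite (proj2 (Nat.ltb_lt _ _) H). auto. Qed.

Lemma linf_ext Q m g h : (forall x, Q x -> g x = h x) -> linf Q m h -> linf Q m g.
Proof. intros E [M H]. exists M. intros x Hx. rewrite E by auto. auto. Qed.

Definition cellQ r s D C C' := is_curve r s D C' /\ same_type r s (length D) C C'.

Lemma edge_rel r s D C C' e : cellQ r s D C C' -> (e < ne C)%nat ->
  fst (pos C' (etgt C e)) = fst (pos C' (esrc C e)) + elen C' e * IZR (fst (edir C e)) /\
  snd (pos C' (etgt C e)) = snd (pos C' (esrc C e)) + elen C' e * IZR (snd (edir C e)).
Proof.
  intros [HC' [Hnv [Hne [Hed _]]]] He.
  destruct (Hed e He) as [E1 [E2 E3]]. rewrite E1, E2, E3.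
  destruct HC' as [_ [_ [_ [_ [_ [_ [Hp _]]]]]]]. apply Hp. lia.
Qed.

Lemma pos_lin r s D C u v : reach C u v -> u = 0%nat ->
  linf (cellQ r s D C) (ne C + 2) (fun x => fst (pos x v)) /\
  linf (cellQ r s D C) (ne C + 2) (fun x => snd (pos x v)).
Proof.
  induction 1; intros Hu; subst.
  - split; [apply (linf_var _ _ 0); lia | apply (linf_var _ _ 1); lia].
  - destruct (IHreach eq_refl) as [H1 H2]. split.
    + apply (linf_ext _ _ _ (fun x => fst (pos x (esrc C e)) + IZR (fst (edir C e)) * thC x (S (S e)))).
      * intros x Hx. destruct (edge_rel _ _ _ _ _ e Hx H) as [E _]. rewrite E. simpl. lra.
      * apply linf_add; auto. apply linf_scal. apply linf_var. lia.
    + apply (linf_ext _ _ _ (fun x => snd (pos x (esrc C e)) + IZR (snd (edir C e)) * thC x (S (S e)))).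
      * intros x Hx. destruct (edge_rel _ _ _ _ _ e Hx H) as [_ E]. rewrite E. simpl. lra.
      * apply linf_add; auto. apply linf_scal. apply linf_var. lia.
  - destruct (IHreach eq_refl) as [H1 H2]. split.
    + apply (linf_ext _ _ _ (fun x => fst (pos x (etgt C e)) + (- IZR (fst (edir C e))) * thC x (S (S e)))).
      * intros x Hx. destruct (edge_rel _ _ _ _ _ e Hx H) as [E _]. rewrite E. simpl. lra.
      * apply linf_add; auto. apply linf_scal. apply linf_var. lia.
    + apply (linf_ext _ _ _ (fun x => snd (pos x (etgt C e)) + (- IZR (snd (edir C e))) * thC x (S (S e)))).
      * intros x Hx. destruct (edge_rel _ _ _ _ _ e Hx H) as [_ E]. rewrite E. simpl. lra.
      * apply linf_add; auto. apply linf_scal. apply linf_var. lia.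
Qed.

Definition evG (r s : nat) (D : list (Z * Z)) (F : nat -> bool) (C : curve) : list (curve -> R) :=
  flat_map (fun i => [fun x => fst (pos x (mvert C i)); fun x => snd (pos x (mvert C i))]) (seq 0 (r + s))
  ++ map (fun j => fun x => quot_coord (dirD D j) (pos x (yvert C j))) (filter F (seq 0 (length D))).

Lemma flat_pair_map (C C' : curve) l : (forall i, In i l -> mvert C' i = mvert C i) ->
  flat_map (fun i => [fst (pos C' (mvert C' i)); snd (pos C' (mvert C' i))]) l =
  map (fun g => g C') (flat_map (fun i => [fun x => fst (pos x (mvert C i)); fun x => snd (pos x (mvert C i))]) l).
Proof. induction l; simpl; intros H; auto. rewrite H by auto. rewrite IHl by auto. auto. Qed.

Lemma ev_evG r s D F C C' : cellQ r s D C C' -> ev_F r s D F C' = map (fun g => g C') (evG r s D F C).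
Proof.
  intros [_ [_ [_ [_ [Hm Hy]]]]]. unfold ev_F, evG. rewrite map_app. f_equal.
  - apply flat_pair_map. intros i Hi. apply in_seq in Hi. symmetry; apply Hm; lia.
  - rewrite map_map. apply map_ext_in. intros j Hj. apply filter_In in Hj as [Hj _].
    apply in_seq in Hj. rewrite Hy by lia. auto.
Qed.

Lemma evG_lin r s D F C : is_curve r s D C -> forall g, In g (evG r s D F C) ->
  linf (cellQ r s D C) (ne C + 2) g.
Proof.
  intros HC g Hg. destruct HC as [_ [Hmv [Hyv [[_ Hreach] _]]]].
  unfold evG in Hg. apply in_app_or in Hg as [Hg|Hg].
  - apply in_flat_map in Hg as [i [Hi Hg]]. apply in_seq in Hi.
    destruct (pos_lin r s D C 0 (mvert C i) (Hreach _ (Hmv i ltac:(lia))) eq_refl) as [H1 H2].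
    simpl in Hg. destruct Hg as [<-|[<-|[]]]; auto.
  - apply in_map_iff in Hg as [j [<- Hj]]. apply filter_In in Hj as [Hj _]. apply in_seq in Hj.
    destruct (pos_lin r s D C 0 (yvert C j) (Hreach _ (Hyv j ltac:(lia))) eq_refl) as [H1 H2].
    unfold quot_coord.
    apply (linf_ext _ _ _ (fun x => IZR (fst (dirD D j)) * snd (pos x (yvert C j)) + (- IZR (snd (dirD D j))) * fst (pos x (yvert C j)))).
    + intros; lra.
    + apply linf_add; apply linf_scal; auto.
Qed.

Lemma nth_lin Q m (G : list (curve -> R)) : (forall g, In g G -> linf Q m g) ->
  forall t, linf Q m (fun x => nth t (map (fun g => g x) G) 0).
Proof.
  induction G; intros H t.
  - destruct t; simpl; apply linf_zero.
  - destruct t; simpl.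
    + apply H; simpl; auto.
    + apply IHG. intros; apply H; simpl; auto.
Qed.

Lemma fact2 r s D F P C : is_curve r s D C -> ev_F r s D F C = P -> general_position r s D F P ->
  (ne C + 2 < 2 * (r + s) + cardF (length D) F)%nat -> False.
Proof.
  intros HC HP Hgp Hlt.
  apply (no_affdim (cell_image r s D F C) (cellQ r s D C) (ev_F r s D F) thC (ne C + 2) (2 * (r + s) + cardF (length D) F) C); auto.

  - intros p [C' [H1 [H2 H3]]]. exists C'. split; auto. split; auto.
  - intros t. destruct (nth_lin _ _ _ (evG_lin r s D F C HC) t) as [M HM].
    exists M. intros x Hx. rewrite (ev_evG r s D F C x Hx). apply HM; auto.
Qed.

Lemma length_flat_pair {A B} (f g : A -> B) l : length (flat_map (fun i => [f i; g i]) l) = (2 * length l)%nat.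
Proof. induction l; simpl; auto. rewrite IHl. lia. Qed.

Lemma length_filter_seq (F : nat -> bool) n : length (filter F (seq 0 n)) = countn n F.
Proof. induction n; [simpl; auto|]. rewrite seq_S, filter_app, length_app, IHn. simpl.
  destruct (F n); simpl; lia. Qed.

Lemma nth_flat_pair {B} (f g : nat -> B) d k : forall a i, (i < k)%nat ->
  nth (2 * i) (flat_map (fun i => [f i; g i]) (seq a k)) d = f (a + i)%nat.
Proof. induction k; intros a i Hi; [lia|]. destruct i.
  - simpl. f_equal; lia.
  - replace (2 * S i)%nat with (S (S (2 * i))) by lia. cbn -[Nat.mul].
    rewrite IHk by lia. f_equal; lia. Qed.

Lemma ev_len r s D F C : length (ev_F r s D F C) = (2 * (r + s) + cardF (length D) F)%nat.
Proof. unfold ev_F. rewrite length_app, length_flat_pair, length_seq, length_map, length_filter_seq. auto. Qed.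

Lemma ev_nth r s D F C i : (i < r + s)%nat -> nth (2 * i) (ev_F r s D F C) 0 = fst (pos C (mvert C i)).
Proof. intros Hi. unfold ev_F. rewrite app_nth1.
  - rewrite nth_flat_pair by auto. auto.
  - rewrite length_flat_pair, length_seq. lia. Qed.

Lemma fact1_lt r s D F P C i j : is_curve r s D C -> ev_F r s D F C = P -> general_position r s D F P ->
  (i < j)%nat -> (j < r + s)%nat -> mvert C i = mvert C j -> False.
Proof.
  intros HC HP Hgp Hij Hj Heq.
  apply (dup_coord (cell_image r s D F C) (2 * (r + s) + cardF (length D) F) (2 * i) (2 * j)); [lia|lia| |].
  - intros p [C' [H1 [H2 <-]]]. split; [apply ev_len|].
    rewrite !ev_nth by lia. destruct H2 as [_ [_ [_ [Hm _]]]]. rewrite <- !Hm by lia. rewrite Heq; auto.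
  - apply Hgp; auto.
Qed.
Open Scope nat_scope.

Fixpoint sumN (k : nat) (f : nat -> nat) : nat :=
  match k with O => O | S k' => (sumN k' f + f k')%nat end.

Lemma sumN_add k f g : sumN k (fun i => f i + g i)%nat = (sumN k f + sumN k g)%nat.
Proof. induction k; simpl; lia. Qed.

Lemma sumN_le k f g : (forall i, i < k -> f i <= g i) -> sumN k f <= sumN k g.
Proof. induction k; simpl; intros H; auto. specialize (IHk ltac:(intros; apply H; lia)). specialize (H k ltac:(lia)). lia. Qed.

Lemma sumN_const k c : sumN k (fun _ => c) = k * c.
Proof. induction k; simpl; lia. Qed.

Lemma sumN_ind k x : x < k -> sumN k (fun v => if Nat.eqb x v then 1 else 0) = 1.
Proof. induction k; simpl; intros H; [lia|]. destruct (Nat.eqb x k) eqn:E.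
  - apply Nat.eqb_eq in E; subst. clear IHk. enough (sumN k (fun v => if Nat.eqb k v then 1 else 0) = 0) by lia.
    clear H. assert (forall j, j <= k -> sumN j (fun v => if Nat.eqb k v then 1 else 0) = 0); [|auto].
    induction j; simpl; intros; auto. rewrite IHj by lia. destruct (Nat.eqb k j) eqn:E; [apply Nat.eqb_eq in E; lia|auto].
  - apply Nat.eqb_neq in E. rewrite IHk by lia. lia. Qed.

Lemma dcount N k (p : nat -> bool) (f : nat -> nat) : (forall i, i < k -> f i < N) ->
  sumN N (fun v => countn k (fun i => p i && Nat.eqb (f i) v)) = countn k p.
Proof. induction k; simpl; intros H.
  - rewrite sumN_const; lia.
  - rewrite sumN_add. rewrite IHk by (intros; apply H; lia).
    destruct (p k); simpl; [rewrite sumN_ind by (apply H; lia); auto| rewrite sumN_const; lia]. Qed.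

Lemma countn_leb r s : countn (r + s) (fun i => Nat.leb r i) = s.
Proof. induction s. - rewrite Nat.add_0_r. assert (forall j, j <= r -> countn j (fun i => Nat.leb r i) = 0); [|auto].
    induction j; simpl; intros; auto. rewrite IHj by lia. destruct (Nat.leb r j) eqn:E; [apply Nat.leb_le in E; lia|auto].
  - replace (r + S s) with (S (r + s)) by lia. simpl. rewrite IHs. replace (Nat.leb r (r+s)) with true by (symmetry; apply Nat.leb_le; lia). lia. Qed.

Lemma countn_le1 k p : (forall i j, i < k -> j < k -> p i = true -> p j = true -> i = j) -> countn k p <= 1.
Proof. induction k; simpl; intros H; [lia|].
  destruct (p k) eqn:E.
  - destruct (countn k p) eqn:E2; [lia|]. destruct (countn_pos k p) as [i [Hi Hp]]; [lia|].
    specialize (H i k ltac:(lia) ltac:(lia) Hp E). lia.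
  - specialize (IHk ltac:(intros; apply H; auto; lia)). lia. Qed.

Lemma countn_pos_iff k p : countn k p = 0 -> forall i, i < k -> p i = false.
Proof. induction k; simpl; intros H i Hi; [lia|]. destruct (Nat.eq_dec i k) as [->|].
  - destruct (p k); auto; lia.
  - apply IHk; lia. Qed.

Lemma valence_sum r s D C : is_curve r s D C ->
  sumN (nv C) (valence r s (length D) C) = 2 * ne C + (r + s) + length D.
Proof.
  intros [He [Hm [Hy _]]]. unfold valence. rewrite !sumN_add.
  pose proof (dcount (nv C) (ne C) (fun _ => true) (esrc C) ltac:(intros; apply He; auto)) as H1.
  pose proof (dcount (nv C) (ne C) (fun _ => true) (etgt C) ltac:(intros; apply He; auto)) as H2.
  pose proof (dcount (nv C) (r + s) (fun _ => true) (mvert C) Hm) as H3.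
  pose proof (dcount (nv C) (length D) (fun _ => true) (yvert C) Hy) as H4.
  simpl in H1, H2, H3, H4. rewrite countn_true in H1, H2, H3, H4. lia.
Qed.

Lemma counting r s D C v0 : is_curve r s D C ->
  (forall i j, i < r + s -> j < r + s -> mvert C i = mvert C j -> i = j) ->
  refined_descendant r s D C -> v0 < nv C -> (forall i, i < r + s -> mvert C i <> v0) ->
  valence r s (length D) C v0 <> 3 ->
  3 * nv C + s + 1 <= 2 * ne C + (r + s) + length D.
Proof.
  intros HC Hinj [Hre Hco] Hv0 Hun Hval.
  rewrite <- (valence_sum r s D C HC).
  set (cm := fun v => countn (r + s) (fun i => Nat.leb r i && Nat.eqb (mvert C i) v)).
  assert (Hs : sumN (nv C) cm = s).
  { unfold cm. rewrite dcount; [apply countn_leb|]. apply HC. }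
  assert (Hpt : forall v, v < nv C -> 3 + cm v + (if Nat.eqb v0 v then 1 else 0) <= valence r s (length D) C v).
  { intros v Hv. pose proof (proj1 (proj2 (proj2 (proj2 (proj2 HC)))) v Hv) as H3.
    assert (Hcase : cm v = 0 \/ 1 <= cm v) by lia. destruct Hcase as [Ecm|Ecm].
    - destruct (Nat.eqb v0 v) eqn:E; [apply Nat.eqb_eq in E; subst v; lia| lia].
    - destruct (countn_pos (r + s) _ (ltac:(unfold cm in Ecm; lia) : 0 < countn (r + s) (fun i => Nat.leb r i && Nat.eqb (mvert C i) v))) as [i [Hi Hp]].
      apply andb_true_iff in Hp as [Hri Hmi]. apply Nat.leb_le in Hri. apply Nat.eqb_eq in Hmi.
      assert (cm v <= 1).
      { unfold cm. apply countn_le1. intros a b Ha Hb Hpa Hpb.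
        apply andb_true_iff in Hpa as [_ Ea]. apply andb_true_iff in Hpb as [_ Eb].
        apply Nat.eqb_eq in Ea. apply Nat.eqb_eq in Eb. apply Hinj; congruence. }
      assert (Nat.eqb v0 v = false) as ->.
      { apply Nat.eqb_neq. intros <-. apply (Hun i); auto. }
      assert (valence r s (length D) C v = 4) by (rewrite <- Hmi; apply Hco; lia). lia. }
  eapply Nat.le_trans; [|apply (sumN_le _ _ _ Hpt)].
  rewrite !sumN_add, sumN_const, Hs, sumN_ind by auto. lia.
Qed.
Open Scope R_scope.

Theorem lemma3p21 (r s : nat) (D : list (Z * Z)) (F : nat -> bool) (P : list R) :
  Forall (fun v => v <> (0%Z, 0%Z)) D ->
  (r + 2 * s + cardF (length D) F + 1 = length D)%nat ->
  general_position r s D F P ->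
  forall C : curve, is_curve r s D C -> ev_F r s D F C = P ->
    (refined_descendant r s D C <-> unoriented_refined_broccoli r s D C).
Proof.
  intros _ Hcard Hgp C HC HP.
  assert (Hinj : forall i j, (i < r + s)%nat -> (j < r + s)%nat -> mvert C i = mvert C j -> i = j).
  { intros i j Hi Hj Heq. destruct (lt_eq_lt_dec i j) as [[Hlt|Heq']|Hlt]; auto.
    - exfalso. apply (fact1_lt r s D F P C i j); auto.
    - exfalso. apply (fact1_lt r s D F P C j i); auto. }
  assert (Hmv : forall i, (i < r + s)%nat -> (mvert C i < nv C)%nat) by apply HC.
  split.
  - intros Hd v Hv. destruct Hd as [Hre Hco] eqn:Hdd.
    destruct (classic (exists i, (i < r + s)%nat /\ mvert C i = v)) as [[i [Hi Hm]]|Hno].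
    + destruct (lt_dec i r) as [Hir|Hir].
      * left. split; [rewrite <- Hm; apply Hre; auto| exists i; auto].
      * right; right. split; [rewrite <- Hm; apply Hco; lia| exists i; split; [lia|auto]].
    + right; left. split.
      * apply NNPP. intros Hval.
        pose proof (counting r s D C v HC Hinj Hd Hv ltac:(intros i Hi Heq; apply Hno; eauto) Hval) as Hc.
        destruct (proj1 (proj2 (proj2 (proj2 HC)))) as [Hnv _].
        apply (fact2 r s D F P C); auto. unfold cardF in *. lia.
      * intros i Hi Heq. apply Hno; eauto.
  - intros Hb. split.
    + intros i Hi. destruct (Hb (mvert C i) (Hmv i ltac:(lia))) as [[H _]|[[_ H]|[_ [j [Hj Hm]]]]]; auto.
      * exfalso. apply (H i); auto; lia.
      * exfalso. assert (i = j) by (apply Hinj; auto; lia). lia.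
    + intros i Hi. destruct (Hb (mvert C i) (Hmv i ltac:(lia))) as [[_ [j [Hj Hm]]]|[[_ H]|[H _]]]; auto.
      * exfalso. assert (i = j) by (apply Hinj; auto; lia). lia.
      * exfalso. apply (H i); auto; lia.
Qed.
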